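(* Suppose $|\Omega| = |A| = 2$. Let $\Sigma$ be a canonical ambiguous experiment (a nonempty closed convex set of maps $\sigma: \Omega \to \Delta(A)$) with $\tau^{*} \in BR(\Sigma)$. Then there exists $\sigma \in \Sigma$ with $\tau^{*} \in BR(\sigma)$.
   Context: Setting: $\Omega$ is a finite set of states, $A$ a finite set of receiver actions. Sender and receiver share a set of priors $P \subseteq \Delta(\Omega)$, nonempty, closed and convex; the receiver has maxmin expected utility preferences with payoff $u_r : A \times \Omega \to \mathbb{R}$. A canonical experiment is a map $\sigma: \Omega \to \Delta(A)$, written $\sigma(a\mid\omega)$. A receiver strategy is $\tau: A \to \Delta(A)$. For $p \in P$, $u_r(p,\sigma,\tau) = \sum_{\omega,m,a} p(\omega)\sigma(m\mid\omega)\tau(a\mid m)u_r(a,\omega)$ and $u_r(\sigma,\tau) = \min_{p\in P} u_r(p,\sigma,\tau)$. For a canonical ambiguous experiment $\Sigma$, $U_r(\Sigma,\tau) = \min_{\sigma \in \Sigma} u_r(\sigma,\tau)$. Best responses: $BR(\sigma) = \arg\max_{\tau} u_r(\sigma,\tau)$ and $BR(\Sigma) = \arg\max_{\tau} U_r(\Sigma,\tau)$, over all $\tau: A \to \Delta(A)$. The obedient strategy $\tau^{*}$ is $\tau^{*}(a\mid a)=1$ for all $a \in A$. *)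

(* Defs.v *)
From HB Require Import structures.
From mathcomp Require Import all_boot all_order all_algebra.
From mathcomp Require Import all_classical all_reals all_analysis.
Set Implicit Arguments. Unset Strict Implicit. Unset Printing Implicit Defensive.
Import Order.TTheory GRing.Theory Num.Theory.
Local Open Scope ring_scope.
Local Open Scope classical_set_scope.

Definition is_dist (R : realType) (T : finType) (q : T -> R) : Prop :=
  (forall t, 0 <= q t) /\ \sum_(t : T) q t = 1.

Definition convex_fun_set (R : realType) (T : Type) (S : set (T -> R)) : Prop :=
  forall f g, S f -> S g -> forall t : R, 0 <= t <= 1 ->
    S (fun x => t * f x + (1 - t) * g x).

Definition convex_fun2_set (R : realType) (T U : Type) (S : set (T -> U -> R)) : Prop :=
  forall f g, S f -> S g -> forall t : R, 0 <= t <= 1 ->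
    S (fun x y => t * f x y + (1 - t) * g x y).

(* canonical experiment sigma : Omega -> Delta(A), sigma w m = sigma(m|w) *)
Definition is_experiment (R : realType) (Om A : finType) (s : Om -> A -> R) : Prop :=
  forall w, is_dist (s w).

(* receiver strategy tau : A -> Delta(A), tau m a = tau(a|m) *)
Definition is_strategy (R : realType) (A : finType) (tau : A -> A -> R) : Prop :=
  forall m, is_dist (tau m).

Definition ur_p (R : realType) (Om A : finType) (ur : A -> Om -> R)
  (p : Om -> R) (s : Om -> A -> R) (tau : A -> A -> R) : R :=
  \sum_(w : Om) \sum_(m : A) \sum_(a : A) p w * s w m * tau m a * ur a w.

(* u_r(sigma, tau) = min_{p in P} u_r(p, sigma, tau)
   (P is nonempty and compact, so the infimum is attained). *)
Definition ur_sigma (R : realType) (Om A : finType) (P : set (Om -> R))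
  (ur : A -> Om -> R) (s : Om -> A -> R) (tau : A -> A -> R) : R :=
  inf [set ur_p ur p s tau | p in P].

Definition Ur_Sigma (R : realType) (Om A : finType) (P : set (Om -> R))
  (ur : A -> Om -> R) (Sg : set (Om -> A -> R)) (tau : A -> A -> R) : R :=
  inf [set ur_sigma P ur s tau | s in Sg].

Definition BR_sigma (R : realType) (Om A : finType) (P : set (Om -> R))
  (ur : A -> Om -> R) (s : Om -> A -> R) (tau : A -> A -> R) : Prop :=
  is_strategy tau /\
  forall tau', is_strategy tau' -> ur_sigma P ur s tau' <= ur_sigma P ur s tau.

Definition BR_Sigma (R : realType) (Om A : finType) (P : set (Om -> R))
  (ur : A -> Om -> R) (Sg : set (Om -> A -> R)) (tau : A -> A -> R) : Prop :=
  is_strategy tau /\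
  forall tau', is_strategy tau' -> Ur_Sigma P ur Sg tau' <= Ur_Sigma P ur Sg tau.

Definition obedient (R : realType) (A : finType) : A -> A -> R :=
  fun m a => if a == m then 1 else 0.

(* Main.v *)
Require Import Defs.
From HB Require Import structures.
From mathcomp Require Import all_boot all_order all_algebra.
From mathcomp Require Import all_classical all_reals all_analysis.
From mathcomp Require Import ring lra.
Import Order.TTheory GRing.Theory Num.Theory.
Local Open Scope ring_scope.
Local Open Scope classical_set_scope.

Module Helpers.
Set Implicit Arguments. Unset Strict Implicit.
Definition theta (R : realType) (a b : R) := b / (1 - (a - b)).

Lemma theta01 (R : realType) (a b : R) : 0 <= a <= 1 -> 0 <= b <= 1 -> a - b != 1 ->
  0 <= theta a b <= 1.
Proof.
move=> /andP[a0 a1] /andP[b0 b1] ne.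
have hlt : a - b < 1 by rewrite lt_neqAle ne /=; lra.
have hp : 0 < 1 - (a - b) by lra.
apply/andP; split; first by rewrite /theta divr_ge0 // ltW.
rewrite /theta ler_pdivrMr // mul1r; lra.
Qed.

Lemma case1 (R : realType) (V : R -> R -> R -> R -> R -> R) (W : R -> R -> R -> R -> R)
  (pA pB x0 x1 m : R) :
  (forall pi x0 x1 a b, a - b != 1 ->
     V pi x0 x1 a b = (a - b) * V pi x0 x1 1 0 +
        (1 - (a - b)) * V pi 0 0 (theta a b) (theta a b)) ->
  (forall x0 x1 a b, W x0 x1 a b = Num.min (V pA x0 x1 a b) (V pB x0 x1 a b)) ->
  V pA x0 x1 1 0 = V pB x0 x1 1 0 ->
  (forall t, 0 <= t <= 1 -> W 0 0 t t <= m) -> m <= W x0 x1 1 0 ->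
  forall a b, 0 <= a <= 1 -> 0 <= b <= 1 -> W x0 x1 a b <= W x0 x1 1 0.
Proof.
move=> Hdec HW Heq Hc Hm a b ha hb.
have Wv : W x0 x1 1 0 = V pA x0 x1 1 0 by rewrite HW Heq minxx.
have [e1|ne] := eqVneq (a - b) 1.
  move: ha hb => /andP[? ?] /andP[? ?].
  have -> : a = 1 by lra.
  have -> : b = 0 by lra.
  by [].
have ht := theta01 ha hb ne.
have hc : a - b <= 1 by move: ha hb => /andP[? ?] /andP[? ?]; lra.
rewrite Wv in Hm.
have := Hc _ ht; rewrite HW ge_min => /orP[hK|hK]; rewrite Wv HW ge_min; apply/orP.
  left; rewrite Hdec //; nra.
right; rewrite Hdec // Heq; rewrite Heq in Hm; nra.
Qed.

Lemma case2 (R : realType) (T : Type) (Sg : set T) (X0 X1 : T -> R)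
  (V : R -> R -> R -> R -> R -> R) (W : R -> R -> R -> R -> R) (pA pB B : R) :
  (forall pi x0 x1 a b, a - b != 1 ->
     V pi x0 x1 a b = (a - b) * V pi x0 x1 1 0 +
        (1 - (a - b)) * V pi 0 0 (theta a b) (theta a b)) ->
  (forall x0 x1 a b, W x0 x1 a b = Num.min (V pA x0 x1 a b) (V pB x0 x1 a b)) ->
  (forall pi t, V pi 0 0 t t = (1 - t) * V pi 0 0 0 0 + t * V pi 0 0 1 1) ->
  (forall s a b, Sg s -> 0 <= a <= 1 -> 0 <= b <= 1 -> - B <= W (X0 s) (X1 s) a b) ->
  (forall s, Sg s -> V pA (X0 s) (X1 s) 1 0 < V pB (X0 s) (X1 s) 1 0) ->
  (exists2 s, Sg s & forall s', Sg s' -> V pA (X0 s') (X1 s') 1 0 <= V pA (X0 s) (X1 s) 1 0) ->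
  (exists2 s, Sg s & forall s', Sg s' -> V pB (X0 s) (X1 s) 1 0 <= V pB (X0 s') (X1 s') 1 0) ->
  (forall a b, 0 <= a <= 1 -> 0 <= b <= 1 ->
     inf [set W (X0 s) (X1 s) a b | s in Sg] <= inf [set W (X0 s) (X1 s) 1 0 | s in Sg]) ->
  exists2 s, Sg s & forall a b, 0 <= a <= 1 -> 0 <= b <= 1 ->
     W (X0 s) (X1 s) a b <= W (X0 s) (X1 s) 1 0.
Proof.
move=> Hdec HW Haff HB Hlt [ss Hss Hmax] [sb Hsb Hmin] HBR.
have WA : forall s, Sg s -> W (X0 s) (X1 s) 1 0 = V pA (X0 s) (X1 s) 1 0.
  by move=> s Hs; rewrite HW; apply/min_idPl/ltW/Hlt.
have [hM|hM] := leP (Num.max (V pA 0 0 0 0) (V pA 0 0 1 1)) (V pA (X0 ss) (X1 ss) 1 0).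
  exists ss => // a b ha hb.
  have [e1|ne] := eqVneq (a - b) 1.
    move: ha hb => /andP[? ?] /andP[? ?].
    have -> : a = 1 by lra.
    have -> : b = 0 by lra.
    by [].
  have /andP[t0 t1] := theta01 ha hb ne.
  have hc : a - b <= 1 by move: ha hb => /andP[? ?] /andP[? ?]; lra.
  rewrite (WA ss Hss) HW ge_min; apply/orP; left; rewrite Hdec // Haff.
  have h0 : V pA 0 0 0 0 <= V pA (X0 ss) (X1 ss) 1 0.
    by apply: le_trans hM; rewrite le_max lexx.
  have h1 : V pA 0 0 1 1 <= V pA (X0 ss) (X1 ss) 1 0.
    by apply: le_trans hM; rewrite le_max lexx orbT.
  set th := theta a b in t0 t1 *.
  have : (1 - th) * V pA 0 0 0 0 + th * V pA 0 0 1 1 <= V pA (X0 ss) (X1 ss) 1 0 by nra.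
  nra.
exfalso.
set M := Num.max (V pA 0 0 0 0) (V pA 0 0 1 1) in hM.
set E1 := [set W (X0 s) (X1 s) 1 0 | s in Sg].
set m := inf E1.
have hlb : has_lbound E1.
  by exists (- B) => _ [s Hs <-]; apply: HB => //; lra.
have mle : forall s, Sg s -> m <= V pA (X0 s) (X1 s) 1 0.
  by move=> s Hs; rewrite -WA //; apply: ge_inf => //; exists s.
have [t0 ht0 hMt] : exists2 t0 : R, (t0 = 0 \/ t0 = 1) & V pA 0 0 t0 t0 = M.
  rewrite /M; case: (leP (V pA 0 0 0 0) (V pA 0 0 1 1)) => h.
    by exists 1; [right|].
  by exists 0; [left|].
set VB := V pB (X0 sb) (X1 sb) 1 0.
set mu := VB - m.
have mup : 0 < mu.
  have := mle _ Hsb; have := Hlt _ Hsb; rewrite /mu /VB; lra.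
set N := V pB 0 0 t0 t0.
set d := VB - N.
have dp : 0 < `|d| + mu by have := normr_ge0 d; lra.
set eps := mu / (2 * (`|d| + mu)).
have e1 : eps * (`|d| + mu) = mu / 2.
  rewrite /eps; field.
  by rewrite gt_eqF.
have epsp : 0 < eps by rewrite /eps divr_gt0 //; lra.
have epsh : eps <= 1 / 2.
  have : eps * mu <= mu / 2 by have := normr_ge0 d; nra.
  nra.
have ed : eps * d <= mu / 2.
  have := ler_norm d; nra.
set a := 1 - eps + eps * t0.
set b := eps * t0.
have ha : 0 <= a <= 1 by rewrite /a; case: ht0 => ->; apply/andP; split; lra.
have hb : 0 <= b <= 1 by rewrite /b; case: ht0 => ->; apply/andP; split; lra.
have hab : a - b = 1 - eps by rewrite /a /b; ring.
have ne : a - b != 1 by rewrite hab; apply/eqP; lra.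
have hth : theta a b = t0.
  rewrite /theta hab /b; field; apply/eqP; lra.
have mM : m < M by have := mle _ Hss; lra.
set delta := Num.min (eps * (M - m)) (mu / 2).
have dpos : 0 < delta by rewrite /delta lt_min; apply/andP; split; nra.
have Hlow : forall s, Sg s -> m + delta <= W (X0 s) (X1 s) a b.
  move=> s Hs; rewrite HW le_min; apply/andP; split.
    rewrite Hdec // hab hth hMt.
    have := mle _ Hs.
    have : delta <= eps * (M - m) by rewrite /delta ge_min lexx.
    nra.
  rewrite Hdec // hab hth -/N.
  have := Hmin _ Hs; rewrite -/VB.
  have : delta <= mu / 2 by rewrite /delta ge_min lexx orbT.
  rewrite /mu /d in ed *.
  nra.
have := HBR _ _ ha hb.
have : m + delta <= inf [set W (X0 s) (X1 s) a b | s in Sg].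
  apply: lb_le_inf.
    by exists (W (X0 ss) (X1 ss) a b); exists ss.
  by move=> _ [s Hs <-]; apply: Hlow.
rewrite -/E1 -/m.
lra.
Qed.

Lemma core (R : realType) (T : Type) (Sg : set T) (X0 X1 : T -> R)
  (V : R -> R -> R -> R -> R -> R) (lo hi B : R) (c0 k0 k1 : R -> R) :
  Sg !=set0 ->
  (forall pi x0 x1 a b, a - b != 1 ->
     V pi x0 x1 a b = (a - b) * V pi x0 x1 1 0 +
        (1 - (a - b)) * V pi 0 0 (theta a b) (theta a b)) ->
  (forall pi x0 x1 t, V pi x0 x1 t t = V pi 0 0 t t) ->
  (forall pi t, V pi 0 0 t t = (1 - t) * V pi 0 0 0 0 + t * V pi 0 0 1 1) ->
  (forall pi x0 x1, V pi x0 x1 1 0 = c0 pi + k0 pi * x0 + k1 pi * x1) ->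
  (forall s a b, Sg s -> 0 <= a <= 1 -> 0 <= b <= 1 ->
      - B <= V lo (X0 s) (X1 s) a b /\ - B <= V hi (X0 s) (X1 s) a b) ->
  (forall s1 s2, Sg s1 -> Sg s2 -> forall t, 0 <= t <= 1 -> exists2 s, Sg s &
      X0 s = t * X0 s1 + (1 - t) * X0 s2 /\ X1 s = t * X1 s1 + (1 - t) * X1 s2) ->
  (forall q0 q1 : R, exists2 s, Sg s & forall s', Sg s' ->
      q0 * X0 s + q1 * X1 s <= q0 * X0 s' + q1 * X1 s') ->
  (forall a b, 0 <= a <= 1 -> 0 <= b <= 1 ->
     inf [set Num.min (V lo (X0 s) (X1 s) a b) (V hi (X0 s) (X1 s) a b) | s in Sg] <=
     inf [set Num.min (V lo (X0 s) (X1 s) 1 0) (V hi (X0 s) (X1 s) 1 0) | s in Sg]) ->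
  exists2 s, Sg s & forall a b, 0 <= a <= 1 -> 0 <= b <= 1 ->
     Num.min (V lo (X0 s) (X1 s) a b) (V hi (X0 s) (X1 s) a b) <=
     Num.min (V lo (X0 s) (X1 s) 1 0) (V hi (X0 s) (X1 s) 1 0).
Proof.
move=> [s0 Hs0] Hdec Hconst Haff Hlin HB Hconv Hatt HBR.
pose W := fun x0 x1 a b => Num.min (V lo x0 x1 a b) (V hi x0 x1 a b).
have HW : forall x0 x1 a b, W x0 x1 a b = Num.min (V lo x0 x1 a b) (V hi x0 x1 a b) by [].
have HW' : forall x0 x1 a b, W x0 x1 a b = Num.min (V hi x0 x1 a b) (V lo x0 x1 a b).
  by move=> *; rewrite minC.
have HBW : forall s a b, Sg s -> 0 <= a <= 1 -> 0 <= b <= 1 -> - B <= W (X0 s) (X1 s) a b.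
  move=> s a b Hs ha hb; have [h1 h2] := HB s a b Hs ha hb.
  by rewrite HW le_min h1 h2.
set m := inf [set W (X0 s) (X1 s) 1 0 | s in Sg].
have hlb : has_lbound [set W (X0 s) (X1 s) 1 0 | s in Sg].
  by exists (- B) => _ [s Hs <-]; apply: HBW => //; lra.
have Hm : forall s, Sg s -> m <= W (X0 s) (X1 s) 1 0.
  by move=> s Hs; apply: ge_inf => //; exists s.
have Hc : forall t, 0 <= t <= 1 -> W 0 0 t t <= m.
  move=> t ht; apply: le_trans (HBR _ _ ht ht).
  apply: lb_le_inf; first by exists (W (X0 s0) (X1 s0) t t); exists s0.
  by move=> _ [s Hs <-]; rewrite /W !(Hconst _ (X0 s)).
have [[s Hs Heq]|nz] := pselect (exists2 s, Sg s &
    V lo (X0 s) (X1 s) 1 0 = V hi (X0 s) (X1 s) 1 0).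
  exists s => //; exact: (case1 Hdec HW Heq Hc (Hm _ Hs)).
have Hatt' : forall pi, (exists2 s, Sg s & forall s', Sg s' ->
     V pi (X0 s') (X1 s') 1 0 <= V pi (X0 s) (X1 s) 1 0) /\
     (exists2 s, Sg s & forall s', Sg s' -> V pi (X0 s) (X1 s) 1 0 <= V pi (X0 s') (X1 s') 1 0).
  move=> pi; split.
    have [s Hs Hmin] := Hatt (- k0 pi) (- k1 pi).
    exists s => // s' Hs'; have := Hmin _ Hs'; rewrite !Hlin; lra.
  have [s Hs Hmin] := Hatt (k0 pi) (k1 pi).
  exists s => // s' Hs'; have := Hmin _ Hs'; rewrite !Hlin; lra.
have [[s1 H1 l1]|npos] := pselect (exists2 s, Sg s &
    V lo (X0 s) (X1 s) 1 0 < V hi (X0 s) (X1 s) 1 0); last first.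
  have Hlt : forall s, Sg s -> V hi (X0 s) (X1 s) 1 0 < V lo (X0 s) (X1 s) 1 0.
    move=> s Hs; rewrite lt_neqAle; apply/andP; split.
      by apply/eqP => e; apply: nz; exists s.
    by rewrite leNgt; apply/negP => h; apply: npos; exists s.
  have [A1 _] := Hatt' hi; have [_ A2] := Hatt' lo.
  exact: (case2 Hdec HW' Haff HBW Hlt A1 A2 HBR).
have [[s2 H2 l2]|nneg] := pselect (exists2 s, Sg s &
    V hi (X0 s) (X1 s) 1 0 < V lo (X0 s) (X1 s) 1 0); last first.
  have Hlt : forall s, Sg s -> V lo (X0 s) (X1 s) 1 0 < V hi (X0 s) (X1 s) 1 0.
    move=> s Hs; rewrite lt_neqAle; apply/andP; split.
      by apply/eqP => e; apply: nz; exists s.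
    by rewrite leNgt; apply/negP => h; apply: nneg; exists s.
  have [A1 _] := Hatt' lo; have [_ A2] := Hatt' hi.
  exact: (case2 Hdec HW Haff HBW Hlt A1 A2 HBR).
exfalso.
pose D := fun s => V hi (X0 s) (X1 s) 1 0 - V lo (X0 s) (X1 s) 1 0.
have D1 : 0 < D s1 by rewrite /D; lra.
have D2 : D s2 < 0 by rewrite /D; lra.
pose t := D s2 / (D s2 - D s1).
have ht : 0 <= t <= 1.
  have hn : D s2 - D s1 < 0 by lra.
  apply/andP; split.
    by rewrite /t -mulrNN -invrN divr_ge0 //; lra.
  rewrite /t -mulrNN -invrN ler_pdivrMr; lra.
have [s Hs [e0 e1]] := Hconv _ _ H1 H2 _ ht.
apply: nz; exists s => //.
apply/eqP; rewrite -subr_eq0; apply/eqP.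
have -> : V lo (X0 s) (X1 s) 1 0 - V hi (X0 s) (X1 s) 1 0 = - D s by rewrite /D; ring.
have : D s = t * D s1 + (1 - t) * D s2.
  by rewrite /D !Hlin e0 e1; ring.
move=> ->; rewrite /t; field; apply/eqP; lra.
Qed.

Definition Vf (R : realType) (u00 u10 u01 u11 : R) (pi x0 x1 a b : R) : R :=
  (1 - pi) * (u10 + (u00 - u10) * (b + (a - b) * x0)) +
  pi * (u11 + (u01 - u11) * (b + (a - b) * x1)).

Lemma Vf_dec (R : realType) (u00 u10 u01 u11 pi x0 x1 a b : R) : a - b != 1 ->
  Vf u00 u10 u01 u11 pi x0 x1 a b = (a - b) * Vf u00 u10 u01 u11 pi x0 x1 1 0 +
    (1 - (a - b)) * Vf u00 u10 u01 u11 pi 0 0 (theta a b) (theta a b).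
Proof.
move=> ne; rewrite /Vf /theta; field.
by rewrite subr_eq0 eq_sym.
Qed.

Lemma Vf_const (R : realType) (u00 u10 u01 u11 pi x0 x1 t : R) :
  Vf u00 u10 u01 u11 pi x0 x1 t t = Vf u00 u10 u01 u11 pi 0 0 t t.
Proof. by rewrite /Vf; ring. Qed.

Lemma Vf_aff (R : realType) (u00 u10 u01 u11 pi t : R) :
  Vf u00 u10 u01 u11 pi 0 0 t t =
  (1 - t) * Vf u00 u10 u01 u11 pi 0 0 0 0 + t * Vf u00 u10 u01 u11 pi 0 0 1 1.
Proof. by rewrite /Vf; ring. Qed.

Lemma Vf_lin (R : realType) (u00 u10 u01 u11 pi x0 x1 : R) :
  Vf u00 u10 u01 u11 pi x0 x1 1 0 =
  ((1 - pi) * u10 + pi * u11) + ((1 - pi) * (u00 - u10)) * x0 + (pi * (u01 - u11)) * x1.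
Proof. by rewrite /Vf; ring. Qed.

Lemma cvx_lb (R : realType) (u v q : R) : 0 <= q <= 1 -> - (`|u| + `|v|) <= v + (u - v) * q.
Proof.
move=> /andP[q0 q1].
have := ler_norm u; have := ler_norm (- u); rewrite normrN.
have := ler_norm v; have := ler_norm (- v); rewrite normrN.
nra.
Qed.

Lemma Vf_lb (R : realType) (u00 u10 u01 u11 pi x0 x1 a b : R) :
  0 <= pi <= 1 -> 0 <= x0 <= 1 -> 0 <= x1 <= 1 -> 0 <= a <= 1 -> 0 <= b <= 1 ->
  - (`|u00| + `|u10| + `|u01| + `|u11|) <= Vf u00 u10 u01 u11 pi x0 x1 a b.
Proof.
move=> /andP[p0 p1] /andP[x00 x01] /andP[x10 x11] /andP[a0 a1] /andP[b0 b1].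
have q0 : 0 <= b + (a - b) * x0 <= 1 by apply/andP; split; nra.
have q1 : 0 <= b + (a - b) * x1 <= 1 by apply/andP; split; nra.
have h0 := cvx_lb u00 u10 q0.
have h1 := cvx_lb u01 u11 q1.
rewrite /Vf.
set A0 := u10 + _ in h0 *; set A1 := u11 + _ in h1 *.
have e0 : 0 <= (1 - pi) * (A0 + (`|u00| + `|u10|)) by apply: mulr_ge0; lra.
have e1 : 0 <= pi * (A1 + (`|u01| + `|u11|)) by apply: mulr_ge0; lra.
have := normr_ge0 u00; have := normr_ge0 u10; have := normr_ge0 u01; have := normr_ge0 u11.
nra.
Qed.

Lemma card2P (T : finType) : #|T| = 2%N -> exists x y : T, x != y /\ (forall t, t = x \/ t = y).
Proof.
move=> h; have hu := enum_uniq T; rewrite cardE in h.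
case E: (enum T) h hu => [|x [|y [|z s]]] //= _.
rewrite inE andbT => hxy.
exists x, y; split => // t.
have : t \in enum T by rewrite mem_enum.
by rewrite E !inE => /orP[/eqP->|/eqP->]; [left|right].
Qed.

Lemma sum2 (R : realType) (T : finType) (x y : T) : x != y -> (forall t, t = x \/ t = y) ->
  forall F : T -> R, \sum_t F t = F x + F y.
Proof.
move=> hxy hall F.
rewrite (bigD1 x) //= (bigD1 y) /=; last by rewrite eq_sym.
rewrite big1 ?addr0 // => i /andP[hx hy].
by case: (hall i) => e; [rewrite e eqxx in hx | rewrite e eqxx in hy].
Qed.

Lemma inf_aff (R : realType) (T : Type) (P : set T) (h : T -> R) (al be : R) :
  P !=set0 -> (forall p, P p -> 0 <= h p <= 1) ->
  inf [set al + be * h p | p in P] =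
  Num.min (al + be * inf (h @` P)) (al + be * sup (h @` P)).
Proof.
move=> [p0 Hp0] hb.
set E := h @` P.
have E0 : E !=set0 by exists (h p0); exists p0.
have Elb : has_lbound E by exists 0 => _ [p Hp <-]; case/andP: (hb p Hp).
have Eub : has_ubound E by exists 1 => _ [p Hp <-]; case/andP: (hb p Hp).
have loE : forall p, P p -> inf E <= h p by move=> p Hp; apply: ge_inf => //; exists p.
have hiE : forall p, P p -> h p <= sup E.
  by move=> p Hp; apply: sup_upper_bound => //; exists p.
set S := [set al + be * h p | p in P].
have S0 : S !=set0 by exists (al + be * h p0); exists p0.
have Slb : has_lbound S.
  exists (al - `|be|) => _ [p Hp <-].
  have := ler_norm be; have := ler_norm (- be); rewrite normrN.
  case/andP: (hb p Hp) => ? ?; nra.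
have lohi : inf E <= sup E := le_trans (loE p0 Hp0) (hiE p0 Hp0).
have Sle : forall p, P p -> inf S <= al + be * h p.
  by move=> p Hp; apply: ge_inf => //; exists p.
case: (leP 0 be) => hbe.
  rewrite (min_idPl _); last by nra.
  apply/le_anti/andP; split; last first.
    by apply: lb_le_inf => // _ [p Hp <-]; have := loE p Hp; nra.
  apply/ler_addgt0Pr => e he.
  pose e' := e / (be + 1).
  have e'p : 0 < e' by rewrite divr_gt0 //; lra.
  have he' : e' * (be + 1) = e by rewrite /e'; field; rewrite gt_eqF //; lra.
  have [_ [p Hp <-] hp] := inf_adherent e'p (conj E0 Elb).
  have h1 := Sle p Hp.
  have : be * h p <= be * (inf E + e') by rewrite ler_wpM2l // ltW.
  lra.
rewrite (min_idPr _); last by nra.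
apply/le_anti/andP; split; last first.
  by apply: lb_le_inf => // _ [p Hp <-]; have := hiE p Hp; nra.
apply/ler_addgt0Pr => e he.
pose e' := e / (1 - be).
have e'p : 0 < e' by rewrite divr_gt0 //; lra.
have he' : e' * (1 - be) = e by rewrite /e'; field; rewrite gt_eqF //; lra.
have [_ [p Hp <-] hp] := sup_adherent e'p (conj E0 Eub).
have h1 := Sle p Hp.
have : be * h p <= be * (sup E - e') by rewrite ler_wnM2l // ?ltW.
lra.
Qed.

Module AttM.
Import numFieldNormedType.Exports.
Import ArrowAsProduct.
Lemma attain (R : realType) (Om A : finType) (Sg : set (Om -> A -> R)) (w0 w1 : Om) (a0 : A) (q0 q1 : R) :
  Sg !=set0 -> (forall s, Sg s -> forall w a, 0 <= s w a <= 1) ->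
  closed (Sg : set {ptws Om -> {ptws A -> R^o}}) ->
  exists2 s, Sg s & forall s', Sg s' -> q0 * s w0 a0 + q1 * s w1 a0 <= q0 * s' w0 a0 + q1 * s' w1 a0.
Proof.
move=> S0 Sb Scl.
have cI : compact [set g : A -> R^o | forall a, `[0, 1] (g a)].
  exact: (@tychonoff A (fun _ => R^o) (fun _ => `[0, 1]) (fun _ => @segment_compact R 0 1)).
have cO : compact [set f : Om -> A -> R^o | forall w, [set g : A -> R^o | forall a, `[0, 1] (g a)] (f w)].
  exact: (@tychonoff Om (fun _ => A -> R^o) (fun _ => [set g : A -> R^o | forall a, `[0, 1] (g a)]) (fun _ => cI)).
have cS : compact (Sg : set (Om -> A -> R^o)).
  apply: (subclosed_compact _ cO); first exact: Scl.
  move=> s Hs w a /=; have := Sb s Hs w a; by rewrite in_itv.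
have hproj : forall w a, continuous (fun s : Om -> A -> R^o => (s w a : R)).
  move=> w a s.
  have h1 := @proj_continuous Om (fun _ => {ptws A -> R^o}) w s. have h2 := @proj_continuous A (fun _ => R) a (s w). exact (continuous_comp h1 h2).
have fc : continuous (fun s : Om -> A -> R^o => (q0 * s w0 a0 + q1 * s w1 a0 : R)).
  move=> s.
  have FF : ProperFilter (nbhs s) by exact: nbhs_pfilter.
  exact: (cvgD (cvgM (cvg_cst q0) (hproj w0 a0 s)) (cvgM (cvg_cst q1) (hproj w1 a0 s))).
have [c cS' Hc] := compact_EVT_min S0 cS (continuous_subspaceT fc).
exists c; first by rewrite inE in cS'.
by move=> s' Hs'; apply: Hc; rewrite inE.
Qed.

End AttM.
End Helpers.
Import Helpers.

Theorem mainTheorem4 (R : realType) (Om A : finType)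
  (P : set (Om -> R)) (ur : A -> Om -> R) (Sg : set (Om -> A -> R)) :
  #|Om| = 2%N -> #|A| = 2%N ->
  (* shared priors: nonempty closed convex subset of Delta(Omega) *)
  P !=set0 -> (forall p, P p -> is_dist p) ->
  closed (P : set {ptws Om -> R^o}) -> convex_fun_set P ->
  (* canonical ambiguous experiment: nonempty closed convex set of experiments *)
  Sg !=set0 -> (forall s, Sg s -> is_experiment s) ->
  closed (Sg : set {ptws Om -> {ptws A -> R^o}}) -> convex_fun2_set Sg ->
  BR_Sigma P ur Sg (@obedient R A) ->
  exists2 s, Sg s & BR_sigma P ur s (@obedient R A).
Proof.
move=> cO cA P0 Pd Pcl Pcv S0 Sexp Scl Scv [_ HBR].
have [w0 [w1 [hw hwall]]] := card2P cO.
have [a0 [a1 [ha haall]]] := card2P cA.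
have sO := sum2 (R:=R) hw hwall.
have sA := sum2 (R:=R) ha haall.
have ha' : a1 != a0 by rewrite eq_sym.
have pw0 : forall p, P p -> p w0 = 1 - p w1.
  by move=> p Hp; have [_ h] := Pd p Hp; move: h; rewrite sO; lra.
have pb : forall p, P p -> 0 <= p w1 <= 1.
  move=> p Hp; have [h1 h2] := Pd p Hp; move: h2; rewrite sO.
  have := h1 w0; have := h1 w1; move=> ? ? ?; apply/andP; split; lra.
have sw : forall s, Sg s -> forall w, s w a1 = 1 - s w a0.
  by move=> s Hs w; have [_ h] := Sexp s Hs w; move: h; rewrite sA; lra.
have sb : forall s, Sg s -> forall w a, 0 <= s w a <= 1.
  move=> s Hs w a; have [h1 h2] := Sexp s Hs w; move: h2; rewrite sA.
  have := h1 a0; have := h1 a1; move=> ? ? ?.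
  by case: (haall a) => ->; apply/andP; split; lra.
have tw : forall tau : A -> A -> R, is_strategy tau -> forall m, tau m a1 = 1 - tau m a0.
  by move=> tau Ht m; have [_ h] := Ht m; move: h; rewrite sA; lra.
have tb : forall tau : A -> A -> R, is_strategy tau -> forall m, 0 <= tau m a0 <= 1.
  move=> tau Ht m; have [h1 h2] := Ht m; move: h2; rewrite sA.
  by have := h1 a0; have := h1 a1; move=> ? ? ?; apply/andP; split; lra.
pose lo := inf [set p w1 | p in P].
pose hi := sup [set p w1 | p in P].
pose V := Vf (ur a0 w0) (ur a1 w0) (ur a0 w1) (ur a1 w1).
have F1 : forall p (s : Om -> A -> R) (tau : A -> A -> R), P p -> Sg s -> is_strategy tau ->
    ur_p ur p s tau = V (p w1) (s w0 a0) (s w1 a0) (tau a0 a0) (tau a1 a0).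
  move=> p s tau Hp Hs Ht; rewrite /ur_p sO !sA.
  rewrite (pw0 p Hp) !(sw s Hs) !(tw tau Ht) /V /Vf; ring.
have F2 : forall (s : Om -> A -> R) (tau : A -> A -> R), Sg s -> is_strategy tau ->
    ur_sigma P ur s tau = Num.min (V lo (s w0 a0) (s w1 a0) (tau a0 a0) (tau a1 a0))
                                  (V hi (s w0 a0) (s w1 a0) (tau a0 a0) (tau a1 a0)).
  move=> s tau Hs Ht; rewrite /ur_sigma.
  pose al := V 0 (s w0 a0) (s w1 a0) (tau a0 a0) (tau a1 a0).
  pose be := V 1 (s w0 a0) (s w1 a0) (tau a0 a0) (tau a1 a0) - al.
  rewrite (@eq_imagel _ _ P _ (fun p => al + be * p w1)); last first.
    by move=> p Hp; rewrite F1 // /be /al /V /Vf; ring.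
  rewrite inf_aff //.
  by congr Num.min; rewrite /be /al /V /Vf /lo /hi; ring.
have F3 : forall tau : A -> A -> R, is_strategy tau -> Ur_Sigma P ur Sg tau =
    inf [set Num.min (V lo (s w0 a0) (s w1 a0) (tau a0 a0) (tau a1 a0))
                     (V hi (s w0 a0) (s w1 a0) (tau a0 a0) (tau a1 a0)) | s in Sg].
  by move=> tau Ht; rewrite /Ur_Sigma; congr inf; apply: eq_imagel => s Hs; apply: F2.
have mk : forall a b : R, 0 <= a <= 1 -> 0 <= b <= 1 ->
    exists tau : A -> A -> R, [/\ is_strategy tau, tau a0 a0 = a & tau a1 a0 = b].
  move=> a b /andP[? ?] /andP[? ?].
  exists (fun m a' => if m == a0 then (if a' == a0 then a else 1 - a)
                      else (if a' == a0 then b else 1 - b)).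
  split; [| by rewrite !eqxx | by rewrite (negbTE ha') eqxx].
  move=> m; split.
    by move=> a'; case: (m == a0); case: (a' == a0); lra.
  by rewrite sA eqxx (negbTE ha'); case: (m == a0); ring.
have obS : is_strategy (@obedient R A).
  move=> m; split; first by move=> a; rewrite /obedient; case: (a == m); lra.
  rewrite sA /obedient.
  by case: (haall m) => ->; rewrite eqxx ?(negbTE ha) ?(negbTE ha'); ring.
have ob0 : @obedient R A a0 a0 = 1 by rewrite /obedient eqxx.
have ob1 : @obedient R A a1 a0 = 0 by rewrite /obedient (negbTE ha).
have lob : 0 <= lo <= 1.
  case: P0 => p0 Hp0; have := pb p0 Hp0 => /andP[? ?].
  apply/andP; split.
    by apply: lb_le_inf; [exists (p0 w1); exists p0 | move=> _ [p Hp <-]; case/andP: (pb p Hp)].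
  apply: le_trans (_ : p0 w1 <= 1) => //; apply: ge_inf; last by exists p0.
  by exists 0 => _ [p Hp <-]; case/andP: (pb p Hp).
have hib : 0 <= hi <= 1.
  case: P0 => p0 Hp0; have := pb p0 Hp0 => /andP[? ?].
  apply/andP; split.
    apply: le_trans (_ : p0 w1 <= hi) => //; apply: sup_upper_bound; last by exists p0.
    by split; [exists (p0 w1); exists p0 | exists 1 => _ [p Hp <-]; case/andP: (pb p Hp)].
  by apply: ge_sup; [exists (p0 w1); exists p0 | move=> _ [p Hp <-]; case/andP: (pb p Hp)].
have := @core R _ Sg (fun s => s w0 a0) (fun s => s w1 a0) V lo hi
  (`|ur a0 w0| + `|ur a1 w0| + `|ur a0 w1| + `|ur a1 w1|)
  (fun pi => (1 - pi) * ur a1 w0 + pi * ur a1 w1)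
  (fun pi => (1 - pi) * (ur a0 w0 - ur a1 w0))
  (fun pi => pi * (ur a0 w1 - ur a1 w1)) S0.
case.
- by move=> pi x0 x1 a b ne; apply: Vf_dec.
- by move=> pi x0 x1 t; apply: Vf_const.
- by move=> pi t; apply: Vf_aff.
- by move=> pi x0 x1; apply: Vf_lin.
- by move=> s a b Hs ha0 hb0; split; apply: Vf_lb => //; apply: sb.
- move=> s1 s2 H1 H2 t ht.
  exists (fun x y => t * s1 x y + (1 - t) * s2 x y); last by [].
  exact: Scv.
- move=> q0 q1; apply: AttM.attain => //; exact: sb.
- move=> a b hab hbb; have [tau [Ht e1 e2]] := mk a b hab hbb.
  have := HBR tau Ht; rewrite !F3 //; by rewrite e1 e2 ob0 ob1.
move=> s Hs Hprop; exists s => //; split => // tau Ht.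
rewrite !F2 // ob0 ob1; apply: Hprop; first exact: tb.
have := tb tau Ht a1; done.
Qed.
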